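(* Let $\mathcal{L}$ and $\mathcal{L}'$ be lattices such that $\mathcal{L}$ can be embedded in $\mathcal{L}'$, and let $l,u:\mathbb{N}\to\mathbb{N}$. If $\mathcal{L}$ is $\Omega(l(n))$ then $\mathcal{L}'$ is $\Omega(l(n))$; and if $\mathcal{L}'$ is $O(u(n))$ then $\mathcal{L}$ is $O(u(n))$.
   Context: A lattice means a partially ordered set $(\mathcal{L},\sqsubseteq)$ with least element $\bot$ in which any two elements have a least upper bound $\sqcup$; for finite $S$, $\bigsqcup S$ is its least upper bound ($\bigsqcup\emptyset=\bot$). A lattice homomorphism $h:\mathcal{L}\to\mathcal{L}'$ satisfies $h(\bot_{\mathcal{L}})=\bot_{\mathcal{L}'}$ and $h(\ell\sqcup\ell')=h(\ell)\sqcup h(\ell')$; it is an embedding (and $\mathcal{L}$ can be embedded in $\mathcal{L}'$) if $h$ is injective. The closure set of a finite $S\subseteq\mathcal{L}$ is $C(S)=\{\bigsqcup S' : S'\subseteq S\}$, and $CS_{\mathcal{L}}(n)=\max\{|C(S)| : S\subseteq\mathcal{L}\text{ finite}, |S|\le n\}$. For $f,g:\mathbb{N}\to\mathbb{N}$: $f$ is $O(g)$ iff $\exists N_0\in\mathbb{N},\exists$ rational $C>0$ with $f(n)\le Cg(n)$ for all $n\ge N_0$; $f$ is $\Omega(g)$ iff $\exists N_0,\exists C>0$ rational with $f(n)\ge Cg(n)$ for all $n\ge N_0$. A lattice $\mathcal{L}$ is $O(f(n))$ (resp. $\Omega(f(n))$) iff $CS_{\mathcal{L}}(n)$ is. *)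

(* Defs.v *)
(* lattices = join-semilattices with bottom (bJoinSemilatticeType). *)
From HB Require Import structures.
From mathcomp Require Import all_boot all_order all_algebra.
From mathcomp Require Import finmap.
From Stdlib Require Import Classical ClassicalEpsilon.
Set Implicit Arguments. Unset Strict Implicit. Unset Printing Implicit Defensive.
Import Order.TTheory GRing.Theory Num.Theory.
Local Open Scope order_scope.


Definition lattice_hom (d : Order.disp_t) (L : bJoinSemilatticeType d)
  (d' : Order.disp_t) (L' : bJoinSemilatticeType d') (h : L -> L') : Prop :=
  h \bot = \bot /\ forall x y : L, h (Order.join x y) = Order.join (h x) (h y).

Definition embeds (d : Order.disp_t) (L : bJoinSemilatticeType d)
  (d' : Order.disp_t) (L' : bJoinSemilatticeType d') : Prop :=
  exists h : L -> L', lattice_hom h /\ injective h.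

Definition closure_set (d : Order.disp_t) (L : bJoinSemilatticeType d)
  (S : {fset L}) : {fset L} :=
  [fset (\big[(@Order.join d L)/(@Order.bottom d L)]_(x <- S') x) | S' : {fset L} in fpowerset S]%fset.

Definition CS_vals (d : Order.disp_t) (L : bJoinSemilatticeType d) (n : nat)
  (k : nat) : Prop :=
  exists S : {fset L}, (#|` S| <= n)%N /\ k = #|` closure_set S|.

Lemma CS_vals_bound (d : Order.disp_t) (L : bJoinSemilatticeType d) n k :
  CS_vals L n k -> (k <= 2 ^ n)%N.
Proof.
move=> [S [hS ->]].
rewrite /closure_set.
apply: leq_trans; first exact: leq_imfset_card.
have -> : size (enum_finmem (mem_fin (fin_finpred (fpowerset S)))) = #|` fpowerset S| by [].
rewrite card_fpowerset leq_exp2l //.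
Qed.

Lemma CS_max_exists (d : Order.disp_t) (L : bJoinSemilatticeType d) n :
  exists k, CS_vals L n k /\ forall k', CS_vals L n k' -> (k' <= k)%N.
Proof.
apply: NNPP => Hno.
have H : forall j, exists k, CS_vals L n k /\ (j <= k)%N.
  elim=> [|j [k [Hk Hjk]]].
    by exists #|` closure_set (fset0 : {fset L})|; split=> //; exists fset0.
  apply: NNPP => Hj; apply: Hno; exists k; split=> // k' Hk'.
  rewrite leqNgt; apply/negP => lt; apply: Hj; exists k'; split=> //.
  exact: leq_ltn_trans Hjk lt.
have [k [Hk Hle]] := H (2 ^ n).+1.
by have := CS_vals_bound Hk; rewrite leqNgt Hle.
Qed.

Definition CS (d : Order.disp_t) (L : bJoinSemilatticeType d) (n : nat) : nat :=
  proj1_sig (constructive_indefinite_description _ (CS_max_exists L n)).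

Lemma CSP (d : Order.disp_t) (L : bJoinSemilatticeType d) n :
  CS_vals L n (CS L n) /\ forall k', CS_vals L n k' -> (k' <= CS L n)%N.
Proof. rewrite /CS; case: constructive_indefinite_description => //. Qed.

Definition bigO (f g : nat -> nat) : Prop :=
  exists (N0 : nat) (C : rat), (0 < C)%R /\
    forall n, (N0 <= n)%N -> ((f n)%:R <= C * (g n)%:R)%R.

Definition bigOmega (f g : nat -> nat) : Prop :=
  exists (N0 : nat) (C : rat), (0 < C)%R /\
    forall n, (N0 <= n)%N -> ((f n)%:R >= C * (g n)%:R)%R.

(* Main.v *)
Require Import Defs.
From mathcomp Require Import all_boot all_order all_algebra.
From mathcomp Require Import finmap.
Set Implicit Arguments. Unset Strict Implicit. Unset Printing Implicit Defensive.
Import Order.TTheory GRing.Theory Num.Theory.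
Local Open Scope order_scope.

Section Aux.
Variables (d : Order.disp_t) (L : bJoinSemilatticeType d).

Lemma bigjoin_le (s : seq L) (z : L) :
  (\big[(@Order.join d L)/(@Order.bottom d L)]_(x <- s) x <= z) = all (fun x => x <= z) s.
Proof.
elim: s => [|a s IH]; first by rewrite big_nil le0x.
by rewrite big_cons leUx IH.
Qed.

Lemma bigjoin_eq (s1 s2 : seq L) : s1 =i s2 ->
  \big[(@Order.join d L)/(@Order.bottom d L)]_(x <- s1) x =
  \big[(@Order.join d L)/(@Order.bottom d L)]_(x <- s2) x.
Proof.
have H : forall t1 t2 : seq L, {subset t1 <= t2} ->
  \big[(@Order.join d L)/(@Order.bottom d L)]_(x <- t1) x <=
  \big[(@Order.join d L)/(@Order.bottom d L)]_(x <- t2) x.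
  move=> t1 t2 sub; rewrite bigjoin_le; apply/allP => x /sub xin.
  have : all (fun y => y <= \big[(@Order.join d L)/(@Order.bottom d L)]_(x <- t2) x) t2.
    by rewrite -bigjoin_le.
  by move/allP/(_ _ xin).
move=> e; apply: le_anti; rewrite !H // => x; by rewrite e.
Qed.
End Aux.

Lemma CS_le (d : Order.disp_t) (L : bJoinSemilatticeType d)
  (d' : Order.disp_t) (L' : bJoinSemilatticeType d') :
  embeds L L' -> forall n, (CS L n <= CS L' n)%N.
Proof.
move=> [h [[h0 hU] hinj]] n.
have [[S [hS ->]] _] := CSP L n.
have [_ Hmax] := CSP L' n.
apply: leq_trans (Hmax #|` closure_set [fset h x | x in S]%fset| _); last first.
  exists [fset h x | x in S]%fset; split=> //.
  apply: leq_trans hS; rewrite (card_imfset _ _ hinj).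
  by [].
have -> : #|` closure_set S| = #|` [fset h x | x in closure_set S]%fset|.
  by rewrite (card_imfset _ _ hinj).
apply: fsubset_leq_card; apply/fsubsetP => y /imfsetP [x /= xin ->].
move: xin => /imfsetP [S' /= S'in ->].
have hb : forall s : seq L, h (\big[(@Order.join d L)/(@Order.bottom d L)]_(x <- s) x)
   = \big[(@Order.join d' L')/(@Order.bottom d' L')]_(x <- map h s) x.
  elim=> [|a s IH]; first by rewrite !big_nil.
  by rewrite /= !big_cons hU IH.
rewrite hb; apply/imfsetP; exists [fset h x | x in S']%fset => /=.
  rewrite fpowersetE; apply/fsubsetP => z /imfsetP [w /= win ->].
  apply/imfsetP; exists w => //=.
  by move: S'in; rewrite fpowersetE => /fsubsetP; apply.
apply: bigjoin_eq => z; apply/mapP/imfsetP => [[w win ->]|[w win ->]]; by exists w.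
Qed.

Theorem mainTheorem2 (d : Order.disp_t) (L : bJoinSemilatticeType d)
  (d' : Order.disp_t) (L' : bJoinSemilatticeType d') (l u : nat -> nat) :
  embeds L L' ->
  (bigOmega (CS L) l -> bigOmega (CS L') l) /\
  (bigO (CS L') u -> bigO (CS L) u).
Proof.
move=> emb; have le := CS_le emb.
split.
  move=> [N0 [C [C0 H]]]; exists N0, C; split=> // n /H hn.
  by apply: (le_trans hn); rewrite ler_nat.
move=> [N0 [C [C0 H]]]; exists N0, C; split=> // n /H hn.
by apply: (le_trans _ hn); rewrite ler_nat.
Qed.
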